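(* Let $k\ge2$ and $a_1,\dots,a_k\ge1$ be integers. Then $$\iota(\mathsf{K}_{a_1,\dots,a_k})=\begin{cases}1+\left(\sum_{i=1}^k\frac{a_i}{a_i-2}\right)^{-1}, & \text{if no } a_i=2,\\ 1, & \text{if some } a_i=2,\end{cases}$$ where $\iota(\mathsf{K}_{a_1,\dots,a_k})=\infty$ when no $a_i=2$ and $\sum_{i=1}^k\frac{a_i}{a_i-2}=0$. In particular, for $k\ge5$, $\iota(\mathsf{K}_{1,1,k})=-\frac{2}{k-4}$.
   Context: For a connected graph $G$ on vertices $v_1,\dots,v_n$, its distance matrix is $D=(d(v_i,v_j))_{i,j=1}^n$, where $d$ is the shortest-path distance; $\vec 1$ denotes the all-ones vector. $G$ is distance exceptional if $D\vec x=\vec 1$ has no solution. A curvature potential is a vector $\vec x$ with $D\vec x=\vec 1$. Curvature index $\iota(G)\in\mathbb{R}\cup\{\infty\}$: if $G$ is distance exceptional or has a curvature potential $\vec x$ with $\vec 1^\top\vec x\neq0$, then $\iota(G)$ is the unique real number with $\{D\vec x:\vec 1^\top\vec x=1\}\cap\mathbb{R}\vec 1=\{\iota(G)\vec 1\}$; otherwise $\iota(G)=\infty$. $\mathsf{K}_{a_1,\dots,a_k}$ is the complete multipartite graph with parts of sizes $a_1,\dots,a_k$. *)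

(* Defs.v *)
From HB Require Import structures.
From mathcomp Require Import all_boot all_order all_algebra.
Set Implicit Arguments. Unset Strict Implicit. Unset Printing Implicit Defensive.
Import Order.TTheory GRing.Theory Num.Theory.
Local Open Scope ring_scope.

Section Graph.
Variables (T : finType) (e : rel T).

Fixpoint walk (n : nat) (x y : T) : bool :=
  if n is n'.+1 then [exists z, e x z && walk n' z y] else x == y.

(* In a connected graph this least n is < #|T|, so searching in
   [0, #|T|) finds it. (For disconnected pairs the value is junk #|T|.) *)
Definition gdist (x y : T) : nat :=
  find (fun n => walk n x y) (iota 0 #|T|).

Definition connected_graph : Prop := forall x y : T, exists n, walk n x y.

(* distance matrix, vertices labelled v_1..v_n via enum_val *)
Definition distmx (R : nzRingType) : 'M[R]_#|T| :=
  \matrix_(i, j) (gdist (enum_val i) (enum_val j))%:R.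
End Graph.

Definition Kmp_vertex (k : nat) (a : 'I_k -> nat) : finType :=
  {i : 'I_k & 'I_(a i)}.

Definition Kmp_rel (k : nat) (a : 'I_k -> nat) : rel (Kmp_vertex a) :=
  fun u v => tag u != tag v.

Section Curvature.
Variable R : realFieldType.

Definition distance_exceptional (n : nat) (D : 'M[R]_n) : Prop :=
  ~ exists x : 'cV[R]_n, D *m x = const_mx 1.

(* curvature_index D c : "iota(G) = c", where c = None encodes infinity. *)
Definition curvature_index (n : nat) (D : 'M[R]_n) (c : option R) : Prop :=
  let cond := distance_exceptional D \/
              exists x : 'cV[R]_n, D *m x = const_mx 1 /\ \sum_i x i 0 != 0 in
  match c with
  | Some r => cond /\
      (exists x : 'cV[R]_n, \sum_i x i 0 = 1 /\ D *m x = const_mx r) /\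
      (forall (x : 'cV[R]_n) (s : R),
          \sum_i x i 0 = 1 -> D *m x = const_mx s -> s = r)
  | None => ~ cond
  end.
End Curvature.

Arguments Kmp_rel {k} a.
Arguments distmx {T} e R.

(* Main.v *)
Require Import Defs.
From HB Require Import structures.
From mathcomp Require Import all_boot all_order all_algebra.
Import Order.TTheory GRing.Theory Num.Theory.
Local Open Scope ring_scope.
Set Implicit Arguments. Unset Strict Implicit.

Lemma find_iota0 (P : pred nat) n N : P n -> (forall m, (m < n)%N -> ~~ P m) ->
  (n < N)%N -> find P (iota 0 N) = n.
Proof.
move=> Pn Pm nN.
have hs : has P (iota 0 N) by apply/hasP; exists n; rewrite ?mem_iota.
have := hs; rewrite has_find size_iota => fN.
have := nth_find 0 hs; rewrite nth_iota // add0n => Pf.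
case: (ltngtP (find P (iota 0 N)) n) => // h.
  by have := Pm _ h; rewrite Pf.
by have := before_find 0 h; rewrite nth_iota // add0n Pn.
Qed.

Lemma uniq_card (T : finType) (s : seq T) : uniq s -> (size s <= #|T|)%N.
Proof. by move=> us; rewrite -(card_uniqP us); apply: max_card. Qed.

Section Kmp.
Variables (k : nat) (a : 'I_k -> nat).
Hypothesis hk : (2 <= k)%N.
Hypothesis ha : forall i, (1 <= a i)%N.
Notation T := (Kmp_vertex a).
Notation e := (Kmp_rel a).

Lemma walk1 (x y : T) : walk e 1 x y = e x y.
Proof.
apply/existsP/idP => [[z /andP[h /eqP <-]] //|h].
by exists y; rewrite h eqxx.
Qed.

Lemma other_part (i : 'I_k) : exists j : 'I_k, j != i.
Proof.
have h0 : (0 < k)%N by apply: leq_trans hk.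
have h1 : (1 < k)%N by [].
have [i0|i0] := eqVneq (nat_of_ord i) 0%N.
  by exists (Ordinal h1); apply/eqP => /(congr1 val) /=; rewrite i0.
by exists (Ordinal h0); apply/eqP => /(congr1 val) /= /esym /eqP; rewrite (negbTE i0).
Qed.

Lemma gdist_eq (n : nat) (x y : T) : walk e n x y ->
  (forall m, (m < n)%N -> ~~ walk e m x y) -> (n < #|T|)%N -> gdist e x y = n.
Proof. by move=> *; apply: find_iota0. Qed.

Definition dnat (u v : T) : nat :=
  if u == v then 0%N else if tag u == tag v then 2%N else 1%N.

Lemma gdistE (u v : T) : gdist e u v = dnat u v.
Proof.
rewrite /dnat; case: (eqVneq u v) => [<-|uv].
  apply: gdist_eq => //=.
  by have := uniq_card (s:=[:: u]) isT.
case: (eqVneq (tag u) (tag v)) => tuv.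
  have [j hj] := other_part (tag u).
  set w : T := Tagged (fun i => 'I_(a i)) (Ordinal (ha j)).
  have euw : e u w by rewrite /e /Kmp_rel /= eq_sym.
  have ewv : e w v by rewrite /e /Kmp_rel /= -tuv.
  have wu : w != u by apply: contraNneq hj => <-.
  have wv : w != v by apply: contraNneq hj => wv0; rewrite tuv -wv0.
  apply: gdist_eq.
  - apply/existsP; exists w; apply/andP; split => //.
    exact: (etrans (walk1 w v) ewv).
  - case=> [|[|]] //= _.
    apply/existsP => -[z /andP[h /eqP zv]]; move: h; rewrite zv /e /Kmp_rel /= tuv eqxx.
    by [].
  - have := uniq_card (s:=[:: u; v; w]); rewrite /= !inE negb_or uv eq_sym wu eq_sym wv.
    by apply.
apply: gdist_eq.
- exact: (etrans (walk1 u v) tuv).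
- by case=> //= _; rewrite uv.
- have := uniq_card (s:=[:: u; v]); rewrite /= !inE uv.
  by apply.
Qed.

End Kmp.
Section Gen.
Variable R : realFieldType.

Lemma sym_swap n (D : 'M[R]_n) (x z : 'cV[R]_n) :
  (forall i j, D i j = D j i) ->
  \sum_i x i 0 * (D *m z) i 0 = \sum_i z i 0 * (D *m x) i 0.
Proof.
move=> sD.
under eq_bigr do rewrite mxE big_distrr.
under [RHS]eq_bigr do rewrite mxE big_distrr.
rewrite exchange_big; apply: eq_bigr => i _; apply: eq_bigr => j _.
by rewrite /= (sD j i) mulrCA mulrC mulrA [RHS]mulrC mulrA.
Qed.

Lemma swap_const n (D : 'M[R]_n) (x z : 'cV[R]_n) r c :
  (forall i j, D i j = D j i) -> D *m z = const_mx r -> D *m x = const_mx c ->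
  r * \sum_i x i 0 = c * \sum_i z i 0.
Proof.
move=> sD hz hx; have := sym_swap x z sD; rewrite hz hx.
under eq_bigr do rewrite mxE mulrC.
under [X in _ = X -> _]eq_bigr do rewrite mxE mulrC.
by rewrite -!big_distrr.
Qed.

Lemma L1 n (D : 'M[R]_n) (z : 'cV[R]_n) r :
  (forall i j, D i j = D j i) -> D *m z = const_mx r -> \sum_i z i 0 = 1 ->
  curvature_index D (Some r).
Proof.
move=> sD hz sz; split; [|split].
- have [r0|r0] := eqVneq r 0.
    rewrite r0 in hz.
    left => -[w hw]; have := swap_const sD hz hw.
    by rewrite mul0r sz mulr1 => /eqP; rewrite eq_sym oner_eq0.
  right; exists (r^-1 *: z); split.
    rewrite -scalemxAr hz; apply/matrixP => i j; rewrite !mxE mulVf //.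
  under eq_bigr do rewrite mxE.
  by rewrite -big_distrr /= sz mulr1 invr_eq0.
- by exists z.
- move=> x s sx hx; have := swap_const sD hz hx.
  by rewrite sx sz !mulr1 => ->.
Qed.

Lemma L2 n (D : 'M[R]_n) (z : 'cV[R]_n) :
  (forall i j, D i j = D j i) -> D *m z = const_mx 1 -> \sum_i z i 0 = 0 ->
  curvature_index D None.
Proof.
move=> sD hz sz /= [ex|[w [hw /eqP []]]].
  by apply: ex; exists z.
have := swap_const sD hz hw; by rewrite sz mul1r mulr0.
Qed.
End Gen.
From mathcomp Require Import ring.
Section Mat.
Variable R : realFieldType.
Variables (k : nat) (a : 'I_k -> nat).
Hypothesis hk : (2 <= k)%N.
Hypothesis ha : forall i, (1 <= a i)%N.
Notation T := (Kmp_vertex a).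
Notation e := (Kmp_rel a).
Notation D := (distmx e R).

Lemma sumT (F : T -> R) : \sum_(j < #|T|) F (enum_val j) = \sum_v F v.
Proof. by rewrite -(big_enum_val F). Qed.

Lemma sum_tag (G : 'I_k -> R) : \sum_(v : T) G (tag v) = \sum_i (a i)%:R * G i.
Proof.
rewrite -(@sig_big_dep R 0 +%R 'I_k (fun i => 'I_(a i)) predT (fun i => predT) (fun i _ => G i)) /=.
by apply: eq_bigr => i _; rewrite sumr_const card_ord mulr_natl.
Qed.

Lemma sum_delta (F : T -> R) (u : T) : \sum_v (u == v)%:R * F v = F u.
Proof.
rewrite (bigD1 u) //= eqxx mul1r big1 ?addr0 // => v /negbTE.
by rewrite eq_sym => ->; rewrite mul0r.
Qed.

Lemma sum_delta' (F : 'I_k -> R) (i0 : 'I_k) : \sum_i (i0 == i)%:R * F i = F i0.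
Proof.
rewrite (bigD1 i0) //= eqxx mul1r big1 ?addr0 // => v /negbTE.
by rewrite eq_sym => ->; rewrite mul0r.
Qed.

Lemma dnatE (u v : T) : (dnat u v)%:R = 1 + (tag u == tag v)%:R - 2 * (u == v)%:R :> R.
Proof.
rewrite /dnat; case: (eqVneq u v) => [<-|uv]; first by rewrite !eqxx mulr1 subrr.
by case: (eqVneq (tag u) (tag v)) => _; rewrite mulr0 subr0 ?addr0.
Qed.

Lemma Dentry i j : D i j = (dnat (enum_val i) (enum_val j))%:R.
Proof. by rewrite mxE gdistE. Qed.

Lemma Dsym i j : D i j = D j i.
Proof. by rewrite !Dentry !dnatE eq_sym [enum_val j == _]eq_sym. Qed.

Definition zv (y : 'I_k -> R) : 'cV[R]_#|T| := \col_j y (tag (enum_val j)).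

Lemma sum_zv y : \sum_i zv y i 0 = \sum_i (a i)%:R * y i.
Proof.
under eq_bigr do rewrite mxE.
by rewrite (sumT (fun v => y (tag v))) sum_tag.
Qed.

Lemma D_zv y j : (D *m zv y) j 0 =
  \sum_i (a i)%:R * y i + ((a (tag (enum_val j)))%:R - 2) * y (tag (enum_val j)).
Proof.
rewrite mxE.
under eq_bigr do rewrite Dentry mxE.
rewrite (sumT (fun v => (dnat (enum_val j) v)%:R * y (tag v))).
set u := enum_val j.
have -> : \sum_(v : T) (dnat u v)%:R * y (tag v) = \sum_(v : T) y (tag v) +
   \sum_(v : T) ((tag u == tag v)%:R * y (tag v)) - 2 * \sum_(v : T) (u == v)%:R * y (tag v).
  rewrite big_distrr -big_split -sumrB; apply: eq_bigr => v _ /=.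
  by rewrite dnatE; ring.
rewrite sum_delta sum_tag (sum_tag (fun i => (tag u == i)%:R * y i)).
under [X in _ + X - _ = _]eq_bigr do rewrite mulrCA.
rewrite sum_delta'; ring.
Qed.
End Mat.

Lemma part1 (R : realFieldType) (k : nat) (a : 'I_k -> nat) :
      (2 <= k)%N -> (forall i, (1 <= a i)%N) ->
      curvature_index (distmx (Kmp_rel a) R)
        (if [exists i, a i == 2%N] then Some 1
         else let S := \sum_(i < k) ((a i)%:R / ((a i)%:R - 2) : R) in
              if S == 0 then None else Some (1 + S^-1)).
Proof.
move=> hk ha.
have sD := Dsym R hk ha.
case: ifP => [/existsP[i0 /eqP ai0]|nex].
  pose y := fun i : 'I_k => (i0 == i)%:R / 2 : R.
  have sy : \sum_i (a i)%:R * y i = 1.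
    under eq_bigr do rewrite /y mulrCA.
    by rewrite sum_delta' ai0 mulfV // pnatr_eq0.
  apply: (L1 (z := zv a y) sD); last by rewrite sum_zv.
  apply/matrixP => j l; rewrite (ord1 l) (D_zv hk ha) [\sum_i _](_ : _ = 1); last exact: sy.
  rewrite !mxE /y.
  case: (eqVneq i0 (tag (enum_val j))) => [<-|_]; first by rewrite ai0 subrr mul0r addr0.
  by rewrite mul0r mulr0 addr0.
have an2 : forall i, (a i)%:R - 2 != 0 :> R.
  move=> i; rewrite subr_eq0 -[2]/(2%:R : R) eqr_nat.
  by apply/negP => h; move/negbT/negP: nex; apply; apply/existsP; exists i.
move=> /=; set S := \sum_(i < k) _.
pose y c := fun i : 'I_k => c / ((a i)%:R - 2) : R.
have sy c : \sum_i (a i)%:R * y c i = c * S.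
  rewrite /S big_distrr; apply: eq_bigr => i _ /=; rewrite /y; ring.
have Dy c : distmx (Kmp_rel a) R *m zv a (y c) = const_mx (c * S + c).
  apply/matrixP => j l; rewrite (ord1 l) (D_zv hk ha) [\sum_i _](_ : _ = c * S); last exact: (sy c).
  by rewrite !mxE /y mulrCA mulfV ?mulr1.
case: ifP => [/eqP S0|/negbT S0].
  apply: (L2 (z := zv a (y 1)) sD); last by rewrite sum_zv sy S0 mulr0.
  by rewrite Dy S0 mulr0 add0r.
apply: (L1 (z := zv a (y S^-1)) sD); last by rewrite sum_zv sy mulVf.
by rewrite Dy mulVf // addrC.
Qed.

Theorem theorem4p3 (R : realFieldType) :
  (forall (k : nat) (a : 'I_k -> nat),
      (2 <= k)%N -> (forall i, (1 <= a i)%N) ->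
      curvature_index (distmx (Kmp_rel a) R)
        (if [exists i, a i == 2%N] then Some 1
         else let S := \sum_(i < k) ((a i)%:R / ((a i)%:R - 2) : R) in
              if S == 0 then None else Some (1 + S^-1)))
  /\
  (forall m : nat, (5 <= m)%N ->
      curvature_index
        (distmx (Kmp_rel (fun i : 'I_3 => nth 0%N [:: 1%N; 1%N; m] i)) R)
        (Some (- 2 / (m%:R - 4)))).
Proof.
split; first exact: part1.
move=> m hm.
set a := (fun i : 'I_3 => nth 0%N [:: 1%N; 1%N; m] i).
have ha : forall i, (1 <= a i)%N.
  by case=> -[|[|[|n]]] hi //=; apply: leq_trans hm.
have h := part1 R (a := a) isT ha.
have nx : [exists i, a i == 2%N] = false.
  apply/existsP => -[[[|[|[|n]]] hi]] //=; rewrite /a /=.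
  by move/eqP => m2; rewrite m2 in hm.
rewrite nx /= in h.
have x5 : 5%:R <= m%:R :> R by rewrite ler_nat.
have x2 : m%:R - 2 != 0 :> R.
  by rewrite subr_eq0; apply: contraTneq x5 => ->; rewrite ler_nat.
have x4 : m%:R - 4 != 0 :> R.
  by rewrite subr_eq0; apply: contraTneq x5 => ->; rewrite ler_nat.
have x4' : 4 - m%:R != 0 :> R by rewrite -opprB oppr_eq0.
have n12 : 1 - 2 != 0 :> R by rewrite subr_eq0 -[1]/(1%:R : R) -[2]/(2%:R : R) eqr_nat.
have hS : \sum_(i < 3) ((a i)%:R / ((a i)%:R - 2) : R) = (4 - m%:R) / (m%:R - 2).
  rewrite !big_ord_recr big_ord0 /= /a /=.
  by field; rewrite ?x2 ?x4 ?x4' ?n12.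
rewrite hS in h.
have -> : - 2 / (m%:R - 4) = 1 + ((4 - m%:R) / (m%:R - 2))^-1 :> R.
  by field; rewrite ?x2 ?x4 ?x4' ?n12.
by rewrite mulf_eq0 invr_eq0 (negbTE x4') (negbTE x2) /= in h.
Qed.
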